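(* Let $P_1,\dots,P_m$ be Hermitian $n$-qubit Pauli operators and $U_1,\dots,U_{m+1}$ be $n$-qubit Clifford unitaries such that, with $E_\beta=U_{m+1}\frac{I+\beta_mP_m}{2}U_m\cdots U_2\frac{I+\beta_1P_1}{2}U_1$ for $\beta\in\{-1,1\}^m$, one has $E_\beta^2=E_\beta$ for all $\beta$ and $\sum_\beta E_\beta^\dagger E_\beta=I$; let $\hat P_1,\dots,\hat P_m$ be pairwise commuting Hermitian Pauli operators with $E_\beta=\prod_{i=1}^m\frac{I+\beta_i\hat P_i}{2}$ for all $\beta$ (these exist). Then for every $\beta\in\{-1,1\}^m$ and all Pauli operators $Q_1,\dots,Q_{2m+1}$, the operator $$E'=Q_{2m+1}U_{m+1}Q_{2m}\frac{I+\beta_mP_m}{2}Q_{2m-1}U_m\cdots Q_3U_2Q_2\frac{I+\beta_1P_1}{2}Q_1U_1$$ satisfies $$E'=Q\cdot\frac{I+(-1)^{\gamma_1}\hat P_1}{2}\cdots\frac{I+(-1)^{\gamma_m}\hat P_m}{2}$$ for some Pauli operator $Q$ and some $\gamma\in\{0,1\}^m$.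
   Context: An $n$-qubit Pauli operator is $c\,\sigma_1\otimes\cdots\otimes\sigma_n$ with $c\in\{\pm1,\pm i\}$ and $\sigma_j\in\{I,X,Y,Z\}$; it is Hermitian iff $c\in\{\pm1\}$. A unitary $U$ is Clifford if $UPU^\dagger$ is a Pauli operator for every Pauli operator $P$. (In the paper, $E'$ is the Kraus operator of an execution path of a loop body in which Pauli faults $Q_j$ are inserted.) *)

(* Defs.v *)
From HB Require Import structures.
From mathcomp Require Import all_boot all_order all_algebra all_field.
Set Implicit Arguments. Unset Strict Implicit. Unset Printing Implicit Defensive.
Import Order.TTheory GRing.Theory Num.Theory.
Local Open Scope ring_scope.

(* n-qubit operators: (2^n) x (2^n) complex matrices. Basis index i : 'I_(2^n),
   qubit k of basis state i is the k-th binary digit of i. *)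
Notation op n := 'M[algC]_(2 ^ n).

Definition qbit (k i : nat) : bool := odd (i %/ 2 ^ k).

Inductive pauli1 := pI | pX | pY | pZ.

Definition sigma (s : pauli1) (a b : bool) : algC :=
  match s with
  | pI => if a == b then 1 else 0
  | pX => if a == b then 0 else 1
  | pY => if a == b then 0 else (if a then 'i else - 'i)
  | pZ => if a == b then (if a then -1 else 1) else 0
  end.

(* tensor product sigma_{s 0} (x) ... (x) sigma_{s (n-1)} *)
Definition pauli_string (n : nat) (s : 'I_n -> pauli1) : op n :=
  \matrix_(i, j) \prod_(k < n) sigma (s k) (qbit k i) (qbit k j).

Definition is_pauli (n : nat) (P : op n) : Prop :=
  exists (c : algC) (s : 'I_n -> pauli1),
    c \in [:: 1; -1; 'i; - 'i] /\ P = c *: pauli_string s.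

Definition is_herm_pauli (n : nat) (P : op n) : Prop :=
  exists (c : algC) (s : 'I_n -> pauli1),
    c \in [:: 1; -1] /\ P = c *: pauli_string s.

Definition adj (n : nat) (A : op n) : op n := (map_mx Num.conj A)^T.

Definition is_unitary (n : nat) (U : op n) : Prop :=
  adj U *m U = 1%:M /\ U *m adj U = 1%:M.

Definition is_clifford (n : nat) (U : op n) : Prop :=
  is_unitary U /\ forall P : op n, is_pauli P -> is_pauli (U *m P *m adj U).

(* (I + (-1)^b P)/2 ; b = false encodes +1, b = true encodes -1 *)
Definition proj (n : nat) (b : bool) (P : op n) : op n :=
  2^-1 *: (1%:M + (-1) ^+ b *: P).

Definition oprod (n k : nat) (A : 'I_k -> op n) : op n :=
  \big[mulmx/1%:M]_(i < k) A i.

(* E_beta = U_{m+1} (I+b_m P_m)/2 U_m ... U_2 (I+b_1 P_1)/2 U_1  (0-based indices) *)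
Definition Ebeta (n m : nat) (P : 'I_m -> op n) (U : 'I_m.+1 -> op n)
    (beta : 'I_m -> bool) : op n :=
  U ord_max *m oprod (fun i : 'I_m =>
     let j := rev_ord i in proj (beta j) (P j) *m U (widen_ord (leqnSn m) j)).

(* E' = Q_{2m+1} U_{m+1} Q_{2m} (I+b_m P_m)/2 Q_{2m-1} U_m ... Q_2 (I+b_1 P_1)/2 Q_1 U_1,
   with Q indexed 0..2m (Q k here is Q_{k+1} in the paper). *)
Definition Efault (n m : nat) (P : 'I_m -> op n) (U : 'I_m.+1 -> op n)
    (beta : 'I_m -> bool) (Q : 'I_(2 * m).+1 -> op n) : op n :=
  Q (inord (2 * m)) *m U ord_max *m oprod (fun i : 'I_m =>
     let j := rev_ord i in
     Q (inord (2 * j + 1)) *m proj (beta j) (P j) *m Q (inord (2 * j))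
       *m U (widen_ord (leqnSn m) j)).

(* Main.v *)
Require Import Defs.
From HB Require Import structures.
From mathcomp Require Import all_boot all_order all_algebra all_field.
Import Order.TTheory GRing.Theory Num.Theory.
Local Open Scope ring_scope.

Definition mul1 (s t : pauli1) : pauli1 :=
  match s, t with
  | pI, u => u | u, pI => u
  | pX, pX => pI | pY, pY => pI | pZ, pZ => pI
  | pX, pY => pZ | pY, pX => pZ
  | pY, pZ => pX | pZ, pY => pX
  | pZ, pX => pY | pX, pZ => pY
  end.

Definition ph1 (s t : pauli1) : algC :=
  match s, t with
  | pX, pY => 'i | pY, pX => - 'i
  | pY, pZ => 'i | pZ, pY => - 'i
  | pZ, pX => 'i | pX, pZ => - 'i
  | _, _ => 1
  end.

Lemma mul1C s t : mul1 s t = mul1 t s.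
Proof. by case: s; case: t. Qed.

Lemma ph1C s t : exists e : bool, ph1 t s = (-1) ^+ e * ph1 s t.
Proof.
case: s; case: t => /=;
  solve [exists false; rewrite expr0 mul1r //
        | exists true; rewrite expr1 ?mulN1r ?opprK //].
Qed.

Lemma sigma_mul s t a b :
  \sum_(c : bool) sigma s a c * sigma t c b = ph1 s t * sigma (mul1 s t) a b.
Proof.
have ii : 'i * 'i = -1 :> algC by rewrite -expr2 sqrCi.
rewrite big_bool /=.
case: s; case: t; case: a; case: b => /=;
  rewrite ?mul0r ?mulr0 ?mul1r ?mulr1 ?add0r ?addr0 ?mulNr ?mulrN ?ii ?opprK ?mulN1r //.
all: by rewrite ?mulr1 ?mul1r.
Qed.

Lemma bits_inj (n i j : nat) : (i < 2 ^ n)%N -> (j < 2 ^ n)%N ->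
  (forall k, (k < n)%N -> qbit k i = qbit k j) -> i = j.
Proof.
elim: n i j => [|n IH] i j.
  by rewrite expn0 !ltnS !leqn0 => /eqP -> /eqP ->.
move=> Hi Hj Hb.
have H0 : odd i = odd j by have := Hb 0%N isT; rewrite /qbit expn0 !divn1.
have H2 : (i %/ 2 = j %/ 2)%N.
  apply: IH; rewrite ?ltn_divLR // -?expnSr //.
  move=> k Hk; have := Hb k.+1 Hk.
  by rewrite /qbit expnS !divnMA.
by rewrite (divn_eq i 2) (divn_eq j 2) H2 !modn2 H0.
Qed.

Definition bitsOf (n : nat) (l : 'I_(2 ^ n)) : {ffun 'I_n -> bool} :=
  [ffun k : 'I_n => qbit k l].
Arguments bitsOf {n}.

Lemma bitsOf_bij n : bijective (@bitsOf n).
Proof.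
apply: inj_card_bij.
  move=> i j /ffunP E; apply: val_inj; apply: (@bits_inj n) => [||k Hk]; rewrite ?ltn_ord //.
  by have := E (Ordinal Hk); rewrite !ffunE.
by rewrite card_ffun !card_ord card_bool.
Qed.

Lemma pauli_string_mul n (s t : 'I_n -> pauli1) :
  pauli_string s *m pauli_string t =
  (\prod_(k < n) ph1 (s k) (t k)) *: pauli_string (fun k => mul1 (s k) (t k)).
Proof.
apply/matrixP => i j; rewrite !mxE.
under eq_bigr => l _ do rewrite !mxE -big_split /=.
pose G (v : {ffun 'I_n -> bool}) :=
  \prod_(k < n) (sigma (s k) (qbit k i) (v k) * sigma (t k) (v k) (qbit k j)).
transitivity (\sum_(v : {ffun 'I_n -> bool}) G v).
  rewrite (reindex (@bitsOf n)); last exact: onW_bij (bitsOf_bij n).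
  by apply: eq_bigr => l _; rewrite /G; apply: eq_bigr => k _; rewrite ffunE.
rewrite /G.
rewrite -(bigA_distr_bigA (fun k c => sigma (s k) (qbit k i) c * sigma (t k) c (qbit k j))).
rewrite -big_split /=; apply: eq_bigr => k _.
exact: sigma_mul.
Qed.

Lemma pauli_string_id n : pauli_string (fun _ : 'I_n => pI) = 1%:M.
Proof.
apply/matrixP => i j; rewrite !mxE /=.
case: (boolP [forall k : 'I_n, qbit k i == qbit k j]) => H.
  have -> : i = j.
    apply: val_inj; apply: (@bits_inj n) => [||k Hk]; rewrite ?ltn_ord //.
    by have /eqP := (forallP H) (Ordinal Hk).
  by rewrite eqxx big1 // => k _; rewrite eqxx.
have Hij : (i == j) = false.
  by apply/negbTE; apply: contra H => /eqP ->; apply/forallP => k.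
rewrite Hij; move: H; rewrite negb_forall => /existsP [k Hk].
by rewrite (bigD1 k) //= (negbTE Hk) mul0r.
Qed.
Set Implicit Arguments. Unset Strict Implicit.

Definition phase (c : algC) := c \in [:: 1; -1; 'i; - 'i].

Lemma phaseM a b : phase a -> phase b -> phase (a * b).
Proof.
have ii : 'i * 'i = -1 :> algC by rewrite -expr2 sqrCi.
rewrite /phase !inE => /or4P [] /eqP -> /or4P [] /eqP ->;
  rewrite ?mul1r ?mulr1 ?mulNr ?mulrN ?opprK ?mulN1r ?mulrN1 ?ii ?opprK ?mulr1 ?mul1r;
  by rewrite !eqxx ?orbT.
Qed.

Lemma phase1 : phase 1.
Proof. by rewrite /phase !inE eqxx. Qed.

Lemma phase_prod n (F : 'I_n -> algC) : (forall k, phase (F k)) -> phase (\prod_k F k).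
Proof. move=> H; apply: (big_ind phase) => //; [exact: phase1 | exact: phaseM]. Qed.

Lemma ph1_phase s t : phase (ph1 s t).
Proof. by case: s; case: t; rewrite /phase !inE eqxx ?orbT. Qed.

Definition sgn (c : algC) := (c == 1) || (c == -1).

Lemma sgnM a b : sgn a -> sgn b -> sgn (a * b).
Proof.
rewrite /sgn => /orP [] /eqP -> /orP [] /eqP ->;
  by rewrite ?mul1r ?mulr1 ?mulN1r ?opprK !eqxx ?orbT.
Qed.

Lemma sgnE c : sgn c -> exists e : bool, c = (-1) ^+ e.
Proof.
by rewrite /sgn => /orP [] /eqP ->; [exists false | exists true]; rewrite ?expr0 ?expr1.
Qed.

Lemma is_pauli_mul n (A B : op n) : is_pauli A -> is_pauli B -> is_pauli (A *m B).
Proof.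
move=> [c [s [Hc ->]]] [d [t [Hd ->]]].
exists (c * d * \prod_(k < n) ph1 (s k) (t k)), (fun k => mul1 (s k) (t k)); split.
  apply: phaseM; first exact: phaseM.
  by apply: phase_prod => k; apply: ph1_phase.
by rewrite -scalemxAl -scalemxAr pauli_string_mul !scalerA.
Qed.

Lemma is_pauli_1 n : is_pauli (1%:M : op n).
Proof.
exists 1, (fun _ => pI); split; first exact: phase1.
by rewrite pauli_string_id scale1r.
Qed.

Lemma herm_pauli n (P : op n) : is_herm_pauli P -> is_pauli P.
Proof.
move=> [c [s [Hc ->]]]; exists c, s; split => //.
by move: Hc; rewrite /phase !inE => /orP [] ->; rewrite ?orbT.
Qed.

Lemma pauli_string_comm n (s t : 'I_n -> pauli1) : exists e : bool,
  pauli_string s *m pauli_string t = (-1) ^+ e *: (pauli_string t *m pauli_string s).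
Proof.
pose e k := ph1 (t k) (s k) != ph1 (s k) (t k).
have He k : ph1 (t k) (s k) = (-1) ^+ (e k) * ph1 (s k) (t k).
  rewrite /e; case: eqP => [-> | Hne]; first by rewrite expr0 mul1r.
  have [[] Hx] := ph1C (s k) (t k) => //.
  by move: Hne; rewrite Hx expr0 mul1r.
have Hs : sgn (\prod_k (-1) ^+ (e k) : algC).
  apply: (big_ind sgn); [by rewrite /sgn eqxx | exact: sgnM |].
  by move=> k _; case: (e k); rewrite ?expr0 ?expr1 /sgn eqxx ?orbT.
have [f Hf] := sgnE Hs.
exists f.
rewrite !pauli_string_mul scalerA.
have -> : pauli_string (fun k => mul1 (t k) (s k)) = pauli_string (fun k => mul1 (s k) (t k)).
  by apply/matrixP => i j; rewrite !mxE; apply: eq_bigr => k _; rewrite mul1C.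
congr (_ *: _).
under [in RHS]eq_bigr => k _ do rewrite He.
rewrite big_split /= Hf mulrA.
by clear Hf; case: f; rewrite ?expr0 ?expr1 ?mulN1r ?opprK ?mul1r.
Qed.

Lemma pauli_comm n (A B : op n) : is_pauli A -> is_pauli B ->
  exists e : bool, A *m B = (-1) ^+ e *: (B *m A).
Proof.
move=> [c [s [_ ->]]] [d [t [_ ->]]].
have [e He] := pauli_string_comm s t.
exists e.
rewrite -!scalemxAl -!scalemxAr He !scalerA.
by congr (_ *: _); rewrite mulrC [c * d]mulrC mulrA.
Qed.

Lemma proj_comm n (A B : op n) b : is_pauli A -> is_pauli B ->
  exists b', proj b A *m B = B *m proj b' A.
Proof.
move=> HA HB; have [e He] := pauli_comm HA HB.
exists (b (+) e).
rewrite /proj -scalemxAl -scalemxAr; congr (_ *: _).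
rewrite mulmxDl mulmxDr mul1mx mulmx1 -scalemxAl He -scalemxAr scalerA signr_addb.
by [].
Qed.
Unset Implicit Arguments. Set Strict Implicit.

Lemma push n m (Pf Uf : 'I_m -> op n) (b : 'I_m -> bool) (Qa Qb : 'I_m -> op n) :
  (forall i, is_pauli (Pf i)) -> (forall i, is_clifford (Uf i)) ->
  (forall i, is_pauli (Qa i)) -> (forall i, is_pauli (Qb i)) ->
  exists (R : op n) (b' : 'I_m -> bool), is_pauli R /\
    \big[mulmx/1%:M]_(i < m) (Qa i *m proj (b i) (Pf i) *m Qb i *m Uf i)
    = R *m \big[mulmx/1%:M]_(i < m) (proj (b' i) (Pf i) *m Uf i).
Proof.
elim: m Pf Uf b Qa Qb => [|m IH] Pf Uf b Qa Qb HP HU HQa HQb.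
  exists 1%:M, (fun _ => false); split; first exact: is_pauli_1.
  by rewrite !big_ord0 mul1mx.
have [R [b' [HR E]]] := IH (fun i => Pf (lift ord0 i)) (fun i => Uf (lift ord0 i))
  (fun i => b (lift ord0 i)) (fun i => Qa (lift ord0 i)) (fun i => Qb (lift ord0 i))
  (fun i => HP _) (fun i => HU _) (fun i => HQa _) (fun i => HQb _).
have [[HU1 HU2] HUc] := HU ord0.
set S := Uf ord0 *m R *m adj (Uf ord0).
have HS : is_pauli S by exact: HUc.
have HUR : Uf ord0 *m R = S *m Uf ord0 by rewrite /S -mulmxA HU1 mulmx1.
clearbody S.
have HQ'' : is_pauli (Qb ord0 *m S) by apply: is_pauli_mul.
have [b0 Hb0] := proj_comm (b ord0) (HP ord0) HQ''.
exists (Qa ord0 *m (Qb ord0 *m S)),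
  (fun i => if unlift ord0 i is Some j then b' j else b0); split.
  exact: is_pauli_mul.
rewrite !big_ord_recl E unlift_none.
under [in RHS]eq_bigr => i _ do rewrite liftK.
rewrite !mulmxA.
rewrite -(mulmxA (Qa ord0 *m proj (b ord0) (Pf ord0) *m Qb ord0) (Uf ord0) R) HUR !mulmxA.
rewrite -(mulmxA (Qa ord0 *m proj (b ord0) (Pf ord0)) (Qb ord0) S).
rewrite -(mulmxA (Qa ord0) (proj (b ord0) (Pf ord0)) (Qb ord0 *m S)) Hb0.
by rewrite !mulmxA.
Qed.

Theorem mainTheorem10 (n m : nat) (P : 'I_m -> op n) (U : 'I_m.+1 -> op n)
  (Phat : 'I_m -> op n) :
  (forall i, is_herm_pauli (P i)) ->
  (forall j, is_clifford (U j)) ->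
  (forall beta : {ffun 'I_m -> bool},
      Ebeta P U beta *m Ebeta P U beta = Ebeta P U beta) ->
  \sum_(beta : {ffun 'I_m -> bool}) adj (Ebeta P U beta) *m Ebeta P U beta
    = 1%:M ->
  (forall i, is_herm_pauli (Phat i)) ->
  (forall i j, Phat i *m Phat j = Phat j *m Phat i) ->
  (forall beta : {ffun 'I_m -> bool},
      Ebeta P U beta = oprod (fun i => proj (beta i) (Phat i))) ->
  forall (beta : {ffun 'I_m -> bool}) (Q : 'I_(2 * m).+1 -> op n),
    (forall k, is_pauli (Q k)) ->
    exists (Q0 : op n) (gamma : 'I_m -> bool),
      is_pauli Q0 /\
      Efault P U beta Q = Q0 *m oprod (fun i => proj (gamma i) (Phat i)).
Proof.
move=> HP HU _ _ _ _ HE beta Q HQ.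
have [R [b' [HR E]]] := @push n m (fun i => P (rev_ord i))
  (fun i => U (widen_ord (leqnSn m) (rev_ord i))) (fun i => beta (rev_ord i))
  (fun i => Q (inord (2 * rev_ord i + 1))) (fun i => Q (inord (2 * rev_ord i)))
  (fun i => herm_pauli (HP _)) (fun i => HU _) (fun i => HQ _) (fun i => HQ _).
pose beta' := [ffun j : 'I_m => b' (rev_ord j)].
have [[HU1 HU2] HUc] := HU ord_max.
set S := U ord_max *m R *m adj (U ord_max).
have HS : is_pauli S by exact: HUc.
have HUR : U ord_max *m R = S *m U ord_max by rewrite /S -mulmxA HU1 mulmx1.
clearbody S.
exists (Q (inord (2 * m)) *m S), beta'; split; first exact: is_pauli_mul.
rewrite -HE /Efault /Ebeta /oprod.
rewrite E.
under [in RHS]eq_bigr => i _ do rewrite /= ffunE rev_ordK.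
by rewrite -!mulmxA (mulmxA (U ord_max)) HUR !mulmxA.
Qed.
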